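(* Let $f:\mathbb{R}\to\mathbb{R}$ be a bounded Abel continuous function. Then $f$ is linear, i.e. there exist $a,b\in\mathbb{R}$ with $f(t)=at+b$ for all $t\in\mathbb{R}$.
   Context: A sequence $(p_n)$ is Abel convergent to $\ell$ if $\sum_{k=0}^{\infty}p_k x^k$ converges for every $0\le x<1$ and $\lim_{x\to 1^-}(1-x)\sum_{k=0}^{\infty}p_k x^k=\ell$. $f$ is Abel continuous if $(f(p_n))$ is Abel convergent to $f(\ell)$ whenever $(p_n)$ is Abel convergent to $\ell$. ''Linear'' here is used in the sense of a function of the form $t\mapsto at+b$. *)

(* Defs.v *)
From Stdlib Require Import Reals.
From Coquelicot Require Import Coquelicot.
Open Scope R_scope.

Definition abel_convergent (p : nat -> R) (l : R) : Prop :=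
  (forall x : R, 0 <= x < 1 -> ex_series (fun k => p k * x ^ k)) /\
  filterlim (fun x : R => (1 - x) * Series (fun k => p k * x ^ k))
    (at_left 1) (locally l).

Definition abel_continuous (f : R -> R) : Prop :=
  forall (p : nat -> R) (l : R),
    abel_convergent p l -> abel_convergent (fun n => f (p n)) (f l).

(* Main.v *)
Require Import Defs.
From Stdlib Require Import Reals Lra Lia Arith Wf_nat FunctionalExtensionality.
From Coquelicot Require Import Coquelicot.
Open Scope R_scope.

Lemma m1pow (k : nat) : (-1)^k = 1 \/ (-1)^k = -1.
Proof.
  induction k as [|k [H|H]]; simpl; [left; lra | right; rewrite H; lra | left; rewrite H; lra].
Qed.

Lemma alt_series (c d x : R) : 0 <= x < 1 ->
  is_series (fun k => (c + d * (-1)^k) * x ^ k) (c / (1 - x) + d / (1 + x)).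
Proof.
  intros Hx.
  apply is_series_ext with (fun k => c * x ^ k + d * (-x) ^ k).
  { intros n. change (c * x ^ n + d * (- x) ^ n = (c + d * (-1) ^ n) * x ^ n). replace ((-x)^n) with ((-1)^n * x^n). ring. rewrite <- Rpow_mult_distr. f_equal. ring. }
  apply (is_series_plus (V:=R_NormedModule)).
  - assert (Hg : is_series (fun k => x ^ k) (/ (1 - x))).
    { apply is_series_geom. rewrite Rabs_pos_eq; lra. }
    apply (is_series_scal_l c) in Hg.
    replace (c / (1 - x)) with (scal c (/ (1 - x))) by (unfold scal; simpl; unfold mult; simpl; unfold Rdiv; ring).
    exact Hg.
  - assert (Hg : is_series (fun k => (-x) ^ k) (/ (1 - - x))).
    { apply is_series_geom. rewrite Rabs_Ropp, Rabs_pos_eq; lra. }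
    apply (is_series_scal_l d) in Hg.
    replace (d / (1 + x)) with (scal d (/ (1 - - x))) by (unfold scal; simpl; unfold mult; simpl; unfold Rdiv; replace (1 - - x) with (1 + x) by ring; ring).
    exact Hg.
Qed.

Lemma alt_abel (c d : R) : abel_convergent (fun k => c + d * (-1)^k) c.
Proof.
  split.
  - intros x Hx. eexists. apply alt_series; exact Hx.
  - apply filterlim_ext_loc with (fun x => c + d * ((1 - x) / (1 + x))).
    { exists (mkposreal 1 Rlt_0_1). intros y Hy Hy1.
      unfold ball in Hy; simpl in Hy; unfold AbsRing_ball, abs, minus, plus, opp in Hy; simpl in Hy.
      apply Rabs_lt_between in Hy.
      rewrite (is_series_unique _ _ (alt_series c d y ltac:(lra))).
      field. lra. }
    apply (filterlim_filter_le_1 (F := locally 1)).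
    { apply filter_le_within. }
    assert (Hc : continuous (fun x => c + d * ((1 - x) / (1 + x))) 1).
    { apply (ex_derive_continuous (K:=R_AbsRing) (V:=R_NormedModule)). auto_derive. lra. }
    unfold continuous in Hc. cbv beta in Hc.
    replace (c + d * ((1 - 1) / (1 + 1))) with c in Hc by field. exact Hc.
Qed.

Lemma jensen (f : R -> R) : abel_continuous f ->
  forall c d, f c = (f (c + d) + f (c - d)) / 2.
Proof.
  intros Hf c d.
  pose (c' := (f (c + d) + f (c - d)) / 2).
  pose (d' := (f (c + d) - f (c - d)) / 2).
  assert (H1 := Hf _ _ (alt_abel c d)).
  assert (E : (fun n => f (c + d * (-1)^n)) = (fun n => c' + d' * (-1)^n)).
  { apply functional_extensionality. intros n.
    destruct (m1pow n) as [H|H]; rewrite H; unfold c', d';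
    [replace (c + d * 1) with (c + d) by ring | replace (c + d * -1) with (c - d) by ring]; field. }
  cbv beta in H1. rewrite E in H1.
  assert (H2 := alt_abel c' d').
  destruct H1 as [_ L1]. destruct H2 as [_ L2].
  exact (filterlim_locally_unique _ _ _ L1 L2).
Qed.

Theorem corollary7 (f : R -> R) :
  (exists M : R, forall t : R, Rabs (f t) <= M) ->
  abel_continuous f ->
  exists a b : R, forall t : R, f t = a * t + b.
Proof.
  intros [M HM] Hf.
  assert (J := jensen f Hf).
  assert (Step : forall x d n, f (x + INR n * d) = f x + INR n * (f (x + d) - f x)).
  { intros x d n. induction n as [n IH] using lt_wf_ind.
    destruct n as [|[|n]].
    - simpl. rewrite Rmult_0_l, Rplus_0_r. ring.
    - simpl. rewrite Rmult_1_l. ring.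
    - assert (Hn := IH n ltac:(lia)). assert (Hn1 := IH (S n) ltac:(lia)).
      assert (Jm := J (x + INR (S n) * d) d).
      rewrite !S_INR in *.
      replace (x + (INR n + 1 + 1) * d) with (x + (INR n + 1) * d + d) by ring.
      replace (x + (INR n + 1) * d - d) with (x + INR n * d) in Jm by ring.
      lra. }
  assert (Z : forall x d, f (x + d) = f x).
  { intros x d. set (D := f (x + d) - f x).
    destruct (Req_dec D 0) as [H|H]; [unfold D in H; lra|].
    exfalso.
    destruct (archimed (2 * M / Rabs D)) as [Ha _].
    assert (HD : 0 < Rabs D) by (apply Rabs_pos_lt; exact H).
    assert (HM0 : 0 <= M) by (apply Rle_trans with (Rabs (f 0)); [apply Rabs_pos|apply HM]).
    assert (Hz : (0 <= up (2 * M / Rabs D))%Z).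
    { apply le_IZR. assert (0 <= 2 * M / Rabs D) by (apply Rdiv_le_0_compat; lra). lra. }
    destruct (IZN _ Hz) as [n Hn]. rewrite Hn, <- INR_IZR_INZ in Ha.
    assert (Hs := Step x d n). fold D in Hs.
    assert (B1 := HM (x + INR n * d)). assert (B2 := HM x).
    assert (Hnd : Rabs (INR n * D) <= 2 * M).
    { replace (INR n * D) with (f (x + INR n * d) - f x) by lra.
      unfold Rminus. eapply Rle_trans; [apply Rabs_triang|]. rewrite Rabs_Ropp. lra. }
    rewrite Rabs_mult, Rabs_pos_eq in Hnd by apply pos_INR.
    apply (Rmult_lt_compat_r (Rabs D)) in Ha; [|exact HD].
    unfold Rdiv in Ha. rewrite Rmult_assoc, Rinv_l in Ha by lra. lra. }
  exists 0, (f 0). intros t. rewrite <- (Rplus_0_l t), Z. ring.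
Qed.
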